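(* Let $(\mathfrak{g}_\sigma,\mathfrak{q})$ be a reductive $CR$-algebra with invariant complement $\mathfrak{q}^c$. Then $\mathfrak{N}(\mathfrak{q},\mathfrak{q}^c)=\{Z\in\mathfrak{q}\mid[Z,\mathfrak{q}^c]\subseteq\mathfrak{q}^c\}$ is a Lie subalgebra of $\mathfrak{q}$ containing $\mathfrak{q}\cap\sigma(\mathfrak{q})$, and for every $Z\in\mathfrak{N}(\mathfrak{q},\mathfrak{q}^c)\setminus\sigma(\mathfrak{q})$ the Levi-order of $\sigma(Z)$ is either $1$ or $+\infty$.
   Context: $\mathfrak{g}$ is a finite-dimensional complex Lie algebra, $\sigma$ an anti-$\mathbb{C}$-linear involution, $\mathfrak{g}_\sigma$ its fixed points; $(\mathfrak{g}_\sigma,\mathfrak{q})$ with $\mathfrak{q}$ a complex subalgebra of $\mathfrak{g}$ is a $CR$-algebra. It is reductive if there is a $\mathbb{C}$-linear complement $\mathfrak{q}^c$ of $\mathfrak{q}$ in $\mathfrak{g}$ (an invariant complement) with $[\mathfrak{q}\cap\sigma(\mathfrak{q}),\mathfrak{q}^c]\subseteq\mathfrak{q}^c$ and $\mathfrak{g}=(\mathfrak{q}\cap\sigma(\mathfrak{q}))\oplus(\mathfrak{q}\cap\sigma(\mathfrak{q}^c))\oplus(\mathfrak{q}^c\cap\sigma(\mathfrak{q}))\oplus(\mathfrak{q}^c\cap\sigma(\mathfrak{q}^c))$. Higher order commutators: $[X_1,\dots,X_h]=[[X_1,\dots,X_{h-1}],X_h]$. For $W\in\sigma(\mathfrak{q})\setminus\mathfrak{q}$,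 its Levi-order is the least $k$ such that there exist $Z_1,\dots,Z_k\in\mathfrak{q}$ with $[W,Z_1,\dots,Z_k]\notin\mathfrak{q}+\sigma(\mathfrak{q})$, and $+\infty$ if no such $k$ exists. *)

(* Defs.v *)
(* complex numbers as R[i] for R : realType (so R[i] is C). *)
From HB Require Import structures.
From mathcomp Require Import all_boot all_order all_algebra.
From mathcomp Require Import complex reals.
Set Implicit Arguments. Unset Strict Implicit. Unset Printing Implicit Defensive.
Import Order.TTheory GRing.Theory Num.Theory.
Local Open Scope ring_scope.

Section LieCR.
Variables (R : realType) (L : vectType R[i]).

Definition is_lie_bracket (br : L -> L -> L) : Prop :=
  [/\ (forall (a : R[i]) x y z, br (a *: x + y) z = a *: br x z + br y z),
      (forall (a : R[i]) x y z, br z (a *: x + y) = a *: br z x + br z y),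
      (forall x, br x x = 0) &
      (forall x y z, br x (br y z) + br y (br z x) + br z (br x y) = 0)].

Definition is_conjugation (br : L -> L -> L) (sigma : L -> L) : Prop :=
  [/\ (forall x y, sigma (x + y) = sigma x + sigma y),
      (forall (a : R[i]) x, sigma (a *: x) = conjc a *: sigma x),
      (forall x, sigma (sigma x) = x) &
      (forall x y, sigma (br x y) = br (sigma x) (sigma y))].

Definition is_subalgebra (br : L -> L -> L) (q : {vspace L}) : Prop :=
  forall x y, x \in q -> y \in q -> br x y \in q.

(* sigma(U) as a complex subspace: the span of the images of a basis of U
   (for an anti-linear involution this is exactly {sigma u | u in U}). *)
Definition sigma_vs (sigma : L -> L) (U : {vspace L}) : {vspace L} :=
  <<map sigma (vbasis U)>>%VS.

Definition reductive_CR (br : L -> L -> L) (sigma : L -> L)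
    (q qc : {vspace L}) : Prop :=
  [/\ (q + qc)%VS = fullv, (q :&: qc)%VS = 0%VS,
      (forall a b, a \in (q :&: sigma_vs sigma q)%VS -> b \in qc -> br a b \in qc),
      ((q :&: sigma_vs sigma q) + (q :&: sigma_vs sigma qc)
        + (qc :&: sigma_vs sigma q) + (qc :&: sigma_vs sigma qc))%VS = fullv &
      directv ((q :&: sigma_vs sigma q) + (q :&: sigma_vs sigma qc)
        + (qc :&: sigma_vs sigma q) + (qc :&: sigma_vs sigma qc))].

Definition Nqqc (br : L -> L -> L) (q qc : {vspace L}) (Z : L) : Prop :=
  Z \in q /\ forall Y, Y \in qc -> br Z Y \in qc.

Definition is_lie_subalgebra_of (br : L -> L -> L) (q : {vspace L})
    (N : L -> Prop) : Prop :=
  [/\ (forall Z, N Z -> Z \in q), N 0,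
      (forall (a : R[i]) Z W, N Z -> N W -> N (a *: Z + W)) &
      (forall Z W, N Z -> N W -> N (br Z W))].

Definition iter_br (br : L -> L -> L) (W : L) (s : seq L) : L := foldl br W s.

Definition levi_witness (br : L -> L -> L) (sigma : L -> L) (q : {vspace L})
    (W : L) (k : nat) : Prop :=
  exists s : seq L, [/\ size s = k, all (fun z => z \in q) s &
    iter_br br W s \notin (q + sigma_vs sigma q)%VS].

(* levi_order_is ... W (Some k): the Levi-order of W is k (least k >= 1);
   levi_order_is ... W None: the Levi-order of W is +infinity. *)
Definition levi_order_is (br : L -> L -> L) (sigma : L -> L) (q : {vspace L})
    (W : L) (k : option nat) : Prop :=
  match k with
  | Some k => (0 < k)%N /\ levi_witness br sigma q W k /\
      forall j, (0 < j < k)%N -> ~ levi_witness br sigma q W j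
  | None => forall j, (0 < j)%N -> ~ levi_witness br sigma q W j
  end.

End LieCR.

(* Main.v *)
Require Import Defs.
From HB Require Import structures.
From mathcomp Require Import all_boot all_order all_algebra.
From mathcomp Require Import complex reals.
From Stdlib Require Classical_Prop.
Import Order.TTheory GRing.Theory Num.Theory.
Set Implicit Arguments. Unset Strict Implicit.
Local Open Scope ring_scope.

Lemma sig0 (R : realType) (L : vectType R[i]) (br : L -> L -> L) sigma :
  is_conjugation br sigma -> sigma 0 = 0.
Proof.
move=> [hadd _ _ _]; have h := hadd 0 0; rewrite addr0 in h.
by apply: (addrI (sigma 0)); rewrite -h addr0.
Qed.

Lemma sig_sum (R : realType) (L : vectType R[i]) (br : L -> L -> L) sigma
  (I : Type) (r : seq I) (P : pred I) (F : I -> L) :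
  is_conjugation br sigma ->
  sigma (\sum_(i <- r | P i) F i) = \sum_(i <- r | P i) sigma (F i).
Proof.
move=> hc; have h0 := sig0 hc; case: hc => hadd _ _ _.
exact: (big_morph sigma hadd h0).
Qed.

Lemma sigma_vsP (R : realType) (L : vectType R[i]) (br : L -> L -> L) sigma
  (U : {vspace L}) x :
  is_conjugation br sigma -> (x \in sigma_vs sigma U) = (sigma x \in U).
Proof.
move=> hc; have hs := fun I r P F => @sig_sum _ _ _ _ I r P F hc; case: (hc) => hadd hsc hinv _.
apply/idP/idP => [hx | hx].
- have := coord_span (X := map_tuple sigma (vbasis U)) hx => ->.
  rewrite hs; apply: rpred_sum => i _; rewrite hsc; apply: rpredZ.
  rewrite /= (nth_map 0) ?size_tuple // hinv.
  by apply: vbasis_mem; apply: mem_nth; rewrite size_tuple.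
- rewrite -(hinv x) (coord_vbasis hx) hs; apply: rpred_sum => i _.
  rewrite hsc; apply: rpredZ; apply: memv_span; apply: map_f.
  by apply: mem_nth; rewrite size_tuple.
Qed.

Lemma rearr (V : zmodType) (a b c d : V) : a + b + c + d = (b + d) + (a + c).
Proof. by rewrite addrAC [a + b]addrC (addrAC b) -addrA. Qed.
Lemma rearr2 (V : zmodType) (a b c d : V) : b + d = a + b + c + d - a - c.
Proof. by rewrite -addrA -opprD rearr addrK. Qed.

Lemma brDl (R : realType) (L : vectType R[i]) (br : L -> L -> L) :
  is_lie_bracket br -> forall x y z, br (x + y) z = br x z + br y z.
Proof. by move=> [h _ _ _] x y z; have := h 1 x y z; rewrite !scale1r. Qed.

Lemma brDr (R : realType) (L : vectType R[i]) (br : L -> L -> L) :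
  is_lie_bracket br -> forall x y z, br z (x + y) = br z x + br z y.
Proof. by move=> [_ h _ _] x y z; have := h 1 x y z; rewrite !scale1r. Qed.

Lemma br0l (R : realType) (L : vectType R[i]) (br : L -> L -> L) :
  is_lie_bracket br -> forall z, br 0 z = 0.
Proof.
move=> hb z; have h := brDl hb 0 0 z; rewrite addr0 in h.
by apply: (addrI (br 0 z)); rewrite -h addr0.
Qed.

Lemma br_anti (R : realType) (L : vectType R[i]) (br : L -> L -> L) :
  is_lie_bracket br -> forall x y, br x y = - br y x.
Proof.
move=> hb x y; have h := brDl hb x y (x + y).
case: (hb) => _ _ hxx _.
rewrite hxx !(brDr hb) !hxx add0r addr0 in h.
by apply/eqP; rewrite -addr_eq0 -h.
Qed.

Lemma br_jac (R : realType) (L : vectType R[i]) (br : L -> L -> L) :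
  is_lie_bracket br -> forall x y z,
  br (br x y) z = br x (br y z) + br y (br z x).
Proof.
move=> hb x y z; case: (hb) => _ _ _ hj.
have /eqP := hj x y z; rewrite addr_eq0 => /eqP ->.
exact: br_anti.
Qed.

Lemma sig_fold (R : realType) (L : vectType R[i]) (br : L -> L -> L) sigma :
  is_conjugation br sigma -> forall s W,
  sigma (foldl br W s) = foldl br (sigma W) (map sigma s).
Proof.
move=> [_ _ _ hbr]; elim=> [//|x s IH] W /=.
by rewrite IH hbr.
Qed.

Unset Implicit Arguments. Set Strict Implicit.

Theorem mainTheorem5 (R : realType) (L : vectType R[i])
    (br : L -> L -> L) (sigma : L -> L) (q qc : {vspace L}) :
  is_lie_bracket br -> is_conjugation br sigma -> is_subalgebra br q ->
  reductive_CR br sigma q qc ->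
  is_lie_subalgebra_of br q (Nqqc br q qc) /\
  (forall Z, Z \in (q :&: sigma_vs sigma q)%VS -> Nqqc br q qc Z) /\
  (forall Z, Nqqc br q qc Z -> Z \notin sigma_vs sigma q ->
     levi_order_is br sigma q (sigma Z) (Some 1%N) \/
     levi_order_is br sigma q (sigma Z) None).
Proof.
move=> hb hc hq [hsum hcap hinvc hfull hdir].
have memsig : forall (U : {vspace L}) x,
    (x \in sigma_vs sigma U) = (sigma x \in U).
  by move=> U x; apply: sigma_vsP hc.
have sig0' := sig0 hc.
case: (hc) => hadd hsc hinv hbr.
case: (hb) => hlin _ _ _.
have anti := br_anti hb; have jac := br_jac hb.
have inv_c : forall a Y, a \in q -> a \in sigma_vs sigma q -> Y \in qc ->
    br a Y \in qc.
  by move=> a Y h1 h2 h3; apply: hinvc => //; rewrite memv_cap h1 h2.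
have qqc0 : forall x, x \in q -> x \in qc -> x = 0.
  move=> x h1 h2; have : x \in (q :&: qc)%VS by rewrite memv_cap h1 h2.
  by rewrite hcap memv0 => /eqP.
have F1 : forall x y, x \in sigma_vs sigma q -> y \in sigma_vs sigma q ->
    br x y \in sigma_vs sigma q.
  by move=> x y; rewrite !memsig hbr; apply: hq.
have F2 : forall y, y \in sigma_vs sigma q -> exists a c,
    [/\ a \in q, a \in sigma_vs sigma q, c \in qc, c \in sigma_vs sigma q &
     y = a + c].
  move=> y hy; have : y \in fullv by apply: memvf.
  rewrite -hfull => /memv_addP [u3 /memv_addP [u2 /memv_addP [a ha [b hb' ->]]
     [c hc' ->]] [d hd Ey]]; subst y.
  move: ha hb' hc' hd; rewrite !memv_cap => /andP[ha1 ha2] /andP[hb1 hb2]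
    /andP[hc1 hc2] /andP[hd1 hd2].
  have ebd : b + d = 0.
    have h1 : b + d \in sigma_vs sigma q.
      by rewrite (rearr2 a b c d) memvB // memvB.
    have h2 : b + d \in sigma_vs sigma qc by rewrite memvD.
    rewrite memsig in h1; rewrite memsig in h2.
    by rewrite -(hinv (b + d)) (qqc0 _ h1 h2) sig0'.
  by exists a, c; split => //; rewrite rearr ebd add0r.
have F3 : forall x, x \in (q + sigma_vs sigma q)%VS ->
    sigma x \in (q + sigma_vs sigma q)%VS.
  move=> x /memv_addP [u hu [v hv ->]]; rewrite hadd addrC memv_add //.
    by rewrite -memsig.
  by rewrite memsig hinv.
have F4 : forall a c, a \in q -> a \in sigma_vs sigma q -> c \in qc ->
    c \in sigma_vs sigma q -> br a c \in sigma_vs sigma q.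
  move=> a c h1 h2 h3 h4; apply: F1 => //.
split.
  split.
  - by move=> Z [].
  - by split; [exact: mem0v | move=> Y _; rewrite br0l // mem0v].
  - move=> a Z W [hZ1 hZ2] [hW1 hW2]; split.
      by apply: memvD => //; apply: memvZ.
    move=> Y hY; rewrite hlin; apply: memvD; last exact: hW2.
    by apply: memvZ; apply: hZ2.
  - move=> Z W [hZ1 hZ2] [hW1 hW2]; split; first exact: hq.
    move=> Y hY; rewrite jac; apply: memvD; first exact: hZ2 (hW2 _ hY).
    apply: hW2; rewrite anti memvN; exact: hZ2.
split.
  by move=> Z /memv_capP [h1 h2]; split => // Y hY; apply: inv_c.
move=> Z [Zq Zc] _.
have [[X [hX hXn]]|hno] :=
  Classical_Prop.classic (exists X, X \in q /\ br (sigma Z) X \notin (q + sigma_vs sigma q)%VS).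
  left; split => //; split.
    by exists [:: X]; split => //=; rewrite hX.
  by move=> j /andP[h1 h2]; move: h1 h2; case: j.
right => j _ [s [_ hs hn]]; apply/negP: hn; apply/negPn.
pose P t := exists n s0, [/\ t = n + s0, s0 \in sigma_vs sigma q, n \in q,
  (forall Y, Y \in qc -> br n Y \in qc) &
  (forall c, c \in qc -> c \in sigma_vs sigma q -> br n c \in sigma_vs sigma q)].
have Pstep : forall t y, P t -> y \in sigma_vs sigma q -> P (br t y).
  move=> t y [n [s0 [-> hs0 hn hn1 hn2]]] hy.
  have [a [c [ha1 ha2 hc1 hc2 ey]]] := F2 y hy.
  exists (br n a), (br n c + br s0 y); split.
  - by rewrite (brDl hb) ey (brDr hb) addrA.
  - by apply: memvD; [apply: hn2 | apply: F1].
  - exact: hq.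
  - move=> Y hY; rewrite jac; apply: memvD.
      by apply: hn1; apply: inv_c.
    by apply: inv_c => //; rewrite anti memvN; apply: hn1.
  - move=> c' h1 h2; rewrite jac; apply: memvD.
      apply: hn2; first exact: inv_c.
      exact: F4.
    apply: F4 => //; rewrite anti memvN; first exact: hn1.
    exact: hn2.
have Pfold : forall s' t, P t -> all (fun y => y \in sigma_vs sigma q) s' ->
    foldl br t s' \in (q + sigma_vs sigma q)%VS.
  elim=> [|y s' IH] t Pt /=.
    by move=> _; case: Pt => n [s0 [-> hs0 hn _ _]]; apply: memv_add.
  by move=> /andP[hy hall]; apply: IH => //; apply: Pstep.
have PZ : P Z.
  exists Z, 0; split; rewrite ?addr0 ?mem0v //.
  move=> c hc1 hc2.
  have h : br (sigma Z) (sigma c) \in (q + sigma_vs sigma q)%VS.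
    apply/negPn/negP => hn; apply: hno; exists (sigma c); split => //.
    by rewrite -memsig.
  have := F3 _ h; rewrite hbr !hinv => /memv_addP [u hu [v hv ev]].
  have [a [c' [ha1 ha2 hc1' hc2' ev']]] := F2 v hv.
  have e0 : br Z c - c' = 0.
    apply: qqc0.
      by rewrite ev ev' addrA addrK; apply: memvD.
    by apply: memvB => //; apply: Zc.
  by rewrite (subr0_eq e0).
rewrite /iter_br -(hinv (foldl br (sigma Z) s)) sig_fold // hinv.
apply: F3; apply: Pfold => //.
by apply/allP => y /mapP [x hx ->]; rewrite memsig hinv; apply: (allP hs).
Qed.
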